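(* For every graph $G$ on $[n]$, the ideal $I^{(2)}_G$ is contained in $I_G$. Moreover, suppose $I^{(2)}_G$ is prime, $I^{(2)}_G\cap\mathbb C[x]=\{0\}$ and $I^{(2)}_G\cap\mathbb C[s]=K_G$. Then $I^{(2)}_G=I_G$.
   Context: Setup. $G\subseteq\binom{[n]}{2}$ is a simple graph, and $G_i$ is the set of neighbours of $i$. We work in the polynomial ring $\mathbb C[s,x]$ with variables $s_{ij}$ ($ij\in G$) and $x_1,\dots,x_n$. $K_G$ denotes the ideal generated by the linear forms $\sum_{j\in G_i}s_{ij}$ for $i\in[n]$ (considered in $\mathbb C[s]$ or in $\mathbb C[s,x]$ as appropriate). $L_G=\sum_{ij\in G}s_{ij}\log(x_i-x_j)$, so $\partial L_G/\partial x_i=\sum_{j\in G_i}s_{ij}/(x_i-x_j)$. The ideals $I^{(0)}_G$ and $I_G$. $I^{(0)}_G$ is generated by $K_G$ and by $\prod_{j\in G_i}(x_i-x_j)\cdot\partial L_G/\partial x_i$ for $i\in[n]$. Then $$I_G=\{f\in\mathbb C[s,x]: abf\in I^{(0)}_G\ \text{for some nonzero } a\in\mathbb C[x]\ \text{and some } b\in\mathbb C[s]\setminus K_G\}.$$ The ideal $I^{(1)}_G$. It is generated by $I^{(0)}_G$ and by $\theta_k=\sum_{ij\in G}s_{ij}\sum_{\ell=0}^k x_i^{k-\ell}x_j^\ell$ for $k=2,\dots,n-2$. Separators and the ideal $I^{(2)}_G$. A subset $T\subset[n]$ is a separator of $G$ if the induced subgraph of $G$ on $[n]\setminus T$ has more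 connected components than $G$. For a separator $T$ and a connected component $C$ of $G\setminus T$, define $f_i(x)=\prod_{t\in T}(x_i-x_t)$ if $i\in C$ and $f_i=0$ otherwise. The expression $\sum_{i=1}^n f_i\,\partial L_G/\partial x_i$ is then a polynomial in $\mathbb C[s,x]$ (a separator-based derivation polynomial). $I^{(2)}_G$ is the ideal generated by $I^{(1)}_G$ together with all separator-based derivation polynomials, over all pairs $(T,C)$. *)

(* Defs.v *)
From HB Require Import structures.
From mathcomp Require Import all_boot all_order all_algebra.
From mathcomp Require Import reals.
From mathcomp Require Import complex.
From mathcomp Require Import fraction mpoly.

Unset Printing Implicit Defensive.

Import Order.TTheory GRing.Theory Num.Theory.
Local Open Scope ring_scope.

Definition simple_graph (n : nat) (G : {set {set 'I_n}}) : Prop :=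
  forall e, e \in G -> #|e| = 2%N.

Section Ring.
Variables (R : realType) (n : nat) (G : {set {set 'I_n}}).

Definition CC := R[i].

(* the edges of G, and the variables: s_e for e in G, then x_1..x_n *)
Definition edge := {e : {set 'I_n} | e \in G}.
Definition var := (edge + 'I_n)%type.
Definition nv := #|{: var}|.

Definition PR := {mpoly CC[nv]}.
Definition FR := {fraction PR}.
Definition tofr (p : PR) : FR := @FracField.tofrac PR p.
Local Notation "x %:F" := (tofr x).

Definition xv (i : 'I_n) : PR := 'X_(enum_rank (inr i : var)).
Definition sv (e : edge) : PR := 'X_(enum_rank (inl e : var)).
(* s_{ij}, for ij in G (0 otherwise; only used for ij in G) *)
Definition s (i j : 'I_n) : PR :=
  if insub [set i; j] is Some e then sv e else 0.

Definition nbhd (i : 'I_n) : {set 'I_n} := [set j | [set i; j] \in G].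

Definition inX (f : PR) : Prop :=
  forall m, m \in msupp f -> forall e : edge, m (enum_rank (inl e : var)) = 0%N.
Definition inS (f : PR) : Prop :=
  forall m, m \in msupp f -> forall i : 'I_n, m (enum_rank (inr i : var)) = 0%N.

Definition ideal_gen_in (A S : PR -> Prop) (f : PR) : Prop :=
  exists l : seq (PR * PR),
    (forall q, q \in l -> A q.1 /\ S q.2) /\ f = \sum_(q <- l) q.1 * q.2.
Definition ideal_gen (S : PR -> Prop) : PR -> Prop :=
  ideal_gen_in (fun _ => True) S.

Definition prime_ideal (I : PR -> Prop) : Prop :=
  ~ I 1 /\ forall a b, I (a * b) -> I a \/ I b.

Definition linform (i : 'I_n) : PR := \sum_(j in nbhd i) s i j.
Definition is_linform (f : PR) : Prop := exists i, f = linform i.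

Definition KG : PR -> Prop := ideal_gen is_linform.
Definition KGs : PR -> Prop := ideal_gen_in inS is_linform.

Definition dL (i : 'I_n) : FR :=
  \sum_(j in nbhd i) (s i j)%:F / (xv i - xv j)%:F.

Definition is_clearedL (f : PR) : Prop :=
  exists i, f%:F = (\prod_(j in nbhd i) (xv i - xv j))%:F * dL i.

Definition I0 : PR -> Prop :=
  ideal_gen (fun f => is_linform f \/ is_clearedL f).

Definition theta (k : nat) : PR :=
  \sum_(i < n) \sum_(j < n | (i < j)%N && ([set i; j] \in G))
     s i j * \sum_(l < k.+1) xv i ^+ (k - l) * xv j ^+ l.

Definition I1 : PR -> Prop :=
  ideal_gen (fun f => I0 f \/ exists k, (2 <= k <= n - 2)%N /\ f = theta k).

Definition adj (U : {set 'I_n}) : rel 'I_n :=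
  fun i j => [&& i \in U, j \in U & [set i; j] \in G].
Definition ncomp (U : {set 'I_n}) : nat := n_comp (adj U) U.

Definition separator (T : {set 'I_n}) : Prop :=
  (ncomp setT < ncomp (~: T))%N.

Definition component (T C : {set 'I_n}) : Prop :=
  exists2 i, i \in ~: T & C = [set j | connect (adj (~: T)) i j].

Definition sepf (T C : {set 'I_n}) (i : 'I_n) : PR :=
  if i \in C then \prod_(t in T) (xv i - xv t) else 0.

Definition is_sep_poly (f : PR) : Prop :=
  exists T C, separator T /\ component T C /\
    f%:F = \sum_(i < n) (sepf T C i)%:F * dL i.

Definition I2 : PR -> Prop := ideal_gen (fun f => I1 f \/ is_sep_poly f).

Definition IG (f : PR) : Prop :=
  exists a b, [/\ inX a, a != 0, inS b, ~ KGs b & I0 (a * b * f)].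

End Ring.

(* Main.v *)
Require Import Defs.
From HB Require Import structures.
From mathcomp Require Import all_boot all_order all_algebra.
From mathcomp Require Import reals complex fraction mpoly.
From mathcomp Require Import ring.
Local Open Scope ring_scope.
Import GRing.Theory.
Set Implicit Arguments.
Unset Strict Implicit.

Section Aux.
Variables (R : realType) (n : nat) (G : {set {set 'I_n}}).
Hypothesis hG : simple_graph n G.

Local Notation PR := (PR R n G).
Local Notation xv := (xv R n G).
Local Notation s := (s R n G).
Local Notation nbhd := (nbhd n G).
Local Notation dL := (dL R n G).
Local Notation tofr := (tofr R n G).
Local Notation I0 := (I0 R n G).
Local Notation ideal_gen_in := (ideal_gen_in R n G).
Local Notation ideal_gen := (ideal_gen R n G).

Lemma ig0 (A S : PR -> Prop) : ideal_gen_in A S 0.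
Proof. by exists [::]; rewrite big_nil. Qed.

Lemma igD (A S : PR -> Prop) f g :
  ideal_gen_in A S f -> ideal_gen_in A S g -> ideal_gen_in A S (f + g).
Proof.
case=> l1 [H1 ->] [l2 [H2 ->]]; exists (l1 ++ l2); split; last by rewrite big_cat.
by move=> q; rewrite mem_cat => /orP [/H1|/H2].
Qed.

Lemma igM (S : PR -> Prop) r f : ideal_gen S f -> ideal_gen S (r * f).
Proof.
case=> l [H ->]; exists [seq (r * q.1, q.2) | q <- l]; split.
  by move=> q /mapP [q' /H [_ ?] ->].
by rewrite big_map mulr_sumr; apply: eq_bigr => q _; rewrite mulrA.
Qed.

Lemma igG (S : PR -> Prop) g : S g -> ideal_gen S g.
Proof. by move=> Hg; exists [:: (1, g)]; split; [move=> q; rewrite inE => /eqP ->|rewrite big_seq1 mul1r]. Qed.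

Lemma ig_ind (S P : PR -> Prop) f : P 0 -> (forall a b, P a -> P b -> P (a + b)) ->
  (forall r g, S g -> P (r * g)) -> ideal_gen S f -> P f.
Proof.
move=> P0 PD PM [l [Hl ->]]; elim: l Hl => [|q l IH] Hl; first by rewrite big_nil.
rewrite big_cons; apply: PD; first by apply: PM; exact: (Hl q (mem_head _ _)).2.
by apply: IH => q' Hq'; apply: Hl; rewrite in_cons Hq' orbT.
Qed.

Lemma ig_sum (S : PR -> Prop) (F : 'I_n -> PR) :
  (forall i, ideal_gen S (F i)) -> ideal_gen S (\sum_i F i).
Proof. by move=> H; apply: big_ind => //; [exact: ig0|exact: igD]. Qed.

Lemma nbhd_neq i j : j \in nbhd i -> i != j.
Proof. by rewrite inE => /hG; rewrite cards2; case: (i != j). Qed.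

Lemma xv_neq i j : i != j -> xv i - xv j != 0.
Proof.
move=> ij; rewrite subr_eq0; apply/eqP => /(congr1 (mcoeff U_(enum_rank (inr i : var n G)))).
rewrite /Defs.xv !mcoeffXU eqxx.
have -> : (enum_rank (inr j : var n G) == enum_rank (inr i : var n G)) = false.
  by apply/negbTE; rewrite (inj_eq enum_rank_inj) (inj_eq (@inr_inj _ _)) eq_sym.
by move/eqP; rewrite oner_eq0.
Qed.

Lemma tofr_neq0 p : p != 0 -> tofr p != 0.
Proof. by rewrite /Defs.tofr tofrac_eq0. Qed.

Lemma fieldaux (F : fieldType) (a P S : F) : a != 0 -> S * P = (a * P) * (S / a).
Proof. by move=> nz; field. Qed.

Lemma ringaux (F : comRingType) (x y z w : F) : x * y * (z * w) = z * y * (x * w).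
Proof. by ring. Qed.

Definition D i : PR := \prod_(j in nbhd i) (xv i - xv j).
Definition A : PR := \prod_i D i.
Definition A' i : PR := \prod_(k | k != i) D k.
Definition h i : PR := \sum_(j in nbhd i) s i j * \prod_(k in nbhd i | k != j) (xv i - xv k).

Lemma AE i : A = D i * A' i.
Proof. by rewrite /A (bigD1 i). Qed.

Lemma hE i : tofr (h i) = tofr (D i) * dL i.
Proof.
rewrite /Defs.tofr /h /Defs.dL rmorph_sum mulr_sumr; apply: eq_bigr => j Hj.
rewrite /D (bigD1 j Hj) /= !rmorphM /=.
have nz := tofr_neq0 (xv_neq (nbhd_neq Hj)).
rewrite /Defs.tofr in nz.
exact: fieldaux.
Qed.

Lemma coreL f (c : 'I_n -> PR) :
  tofr f = \sum_i tofr (c i) * dL i -> I0 (A * f).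
Proof.
move=> Ef.
have -> : A * f = \sum_i (c i * A' i) * h i.
  apply/eqP; rewrite -(@tofrac_eq PR); apply/eqP.
  rewrite rmorph_sum rmorphM /=; rewrite /Defs.tofr in Ef; rewrite Ef mulr_sumr.
  apply: eq_bigr => i _; rewrite !rmorphM /=.
  have := hE i; rewrite /Defs.tofr => ->.
  rewrite (AE i) rmorphM /=; exact: ringaux.
rewrite /Defs.I0; apply: ig_sum => i; apply: igM; apply: igG; right; exists i; exact: hE.
Qed.


Definition adj i j := [set i; j] \in G.

Lemma adjC i j : adj i j = adj j i.
Proof. by rewrite /adj setUC. Qed.

Lemma sC i j : s i j = s j i.
Proof. by rewrite /Defs.s setUC. Qed.

Lemma adjii i : adj i i = false.
Proof. by apply/negP => /hG; rewrite setUid cards1. Qed.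

Lemma condE a b : adj b a && ~~ (b < a)%N = (a < b)%N && adj a b.
Proof.
rewrite adjC; case: (ltngtP a b) => H /=.
- by rewrite andbT.
- by rewrite andbF.
- by rewrite (ord_inj H) adjii.
Qed.

Lemma fieldaux2 (F : fieldType) (a b u v S P : F) : a - b != 0 -> u - v = (a - b) * P ->
  u * (S / (a - b)) + v * (S / (b - a)) = S * P.
Proof.
move=> nz E; have -> : u = v + (a - b) * P by rewrite -E addrC subrK.
have nz' : b - a != 0 by rewrite -opprB oppr_eq0.
by field; rewrite nz nz'.
Qed.

Lemma thetaE k : tofr (theta R n G k) = \sum_i tofr (xv i ^+ k.+1) * dL i.
Proof.
pose X i := tofr (xv i). pose S i j := tofr (s i j).
pose t i j := X i ^+ k.+1 * (S i j / (X i - X j)).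
have R1 : \sum_i tofr (xv i ^+ k.+1) * dL i = \sum_i \sum_(j | adj i j) t i j.
  apply: eq_bigr => i _; rewrite /Defs.dL mulr_sumr /Defs.tofr rmorphXn.
  by apply: eq_big => [j|j _]; [rewrite inE | rewrite /t /X /S /Defs.tofr rmorphB].
have L1 : tofr (theta R n G k) = \sum_(i < n) \sum_(j < n | (i < j)%N && adj i j)
     S i j * \sum_(l < k.+1) X i ^+ (k - l) * X j ^+ l.
  rewrite /theta /Defs.tofr rmorph_sum; apply: eq_bigr => i _; rewrite rmorph_sum.
  apply: eq_bigr => j _; rewrite rmorphM rmorph_sum; congr (_ * _).
  by apply: eq_bigr => l _; rewrite rmorphM !rmorphXn.
rewrite R1 L1.
have R2 : \sum_i \sum_(j | adj i j) t i j =
    \sum_(i < n) \sum_(j < n | (i < j)%N && adj i j) t i j + \sum_(i < n) \sum_(j < n | (i < j)%N && adj i j) t j i.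
  have E1 : \sum_i \sum_(j | adj i j) t i j = \sum_i (\sum_(j | adj i j && (i < j)%N) t i j
      + \sum_(j | adj i j && ~~ (i < j)%N) t i j).
    by apply: eq_bigr => i _; rewrite (bigID (fun j : 'I_n => (i < j)%N)).
  rewrite E1 big_split; congr (_ + _).
    by apply: eq_bigr => i _; apply: eq_bigl => j; rewrite andbC.
  under eq_bigr do rewrite big_mkcond.
  rewrite [LHS]exchange_big /=.
  apply: eq_bigr => a _; rewrite [RHS]big_mkcond; apply: eq_bigr => b _.

  by rewrite condE.
rewrite R2 -big_split; apply: eq_bigr => i _; rewrite -big_split.
apply: eq_bigr => j /andP [Hij Hadj].
rewrite /t /S sC -sC.
have nz : X i - X j != 0.
  rewrite /X /Defs.tofr -rmorphB tofrac_eq0; apply: xv_neq.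
  by apply/eqP => E; move: Hij; rewrite E ltnn.
symmetry; apply: fieldaux2 => //.
by rewrite subrXX.
Qed.

Local Notation inX := (inX R n G).
Local Notation inS := (inS R n G).

Lemma inX1 : inX 1.
Proof. by move=> m; rewrite msupp1 inE => /eqP -> e; rewrite mnm0E. Qed.

Lemma inXM p q : inX p -> inX q -> inX (p * q).
Proof.
move=> Hp Hq m /msuppM_le /allpairsP [[m1 m2] [/= H1 H2 ->]] e.
by rewrite mnmDE (Hp _ H1) (Hq _ H2).
Qed.

Lemma inXB p q : inX p -> inX q -> inX (p - q).
Proof. by move=> Hp Hq m /msuppB_le; rewrite mem_cat => /orP [/Hp|/Hq]. Qed.

Lemma inXx i : inX (xv i).
Proof.
move=> m; rewrite /Defs.xv msuppX inE => /eqP -> e; rewrite mnm1E.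
by rewrite (inj_eq enum_rank_inj).
Qed.

Lemma inX_A : inX A.
Proof.
apply: big_ind => //; [exact: inX1|exact: inXM|] => i _.
apply: big_ind => //; [exact: inX1|exact: inXM|] => j _.
by apply: inXB; apply: inXx.
Qed.

Lemma A_neq0 : A != 0.
Proof.
apply/prodf_neq0 => i _; apply/prodf_neq0 => j Hj.
exact: xv_neq (nbhd_neq Hj).
Qed.

Lemma inS1 : inS 1.
Proof. by move=> m; rewrite msupp1 inE => /eqP -> e; rewrite mnm0E. Qed.

Lemma notKGs1 : ~ KGs R n G 1.
Proof.
case=> l [Hl E].
have := congr1 (meval (fun _ => 0 : CC R)) E.
rewrite meval1 raddf_sum big_seq big1 ?oner_eq0 //.
  by move=> /eqP; rewrite oner_eq0.
move=> q /Hl [_ [i ->]]; apply: (etrans (mevalM _ _ _)); rewrite /linform raddf_sum big1 ?mulr0 // => j _.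
by rewrite /Defs.s; case: insub => [e|]; [exact: (etrans (mevalXU _ _)) | exact: (etrans (meval0 _))].
Qed.

End Aux.

Theorem mainTheorem11 (R : realType) (n : nat) (G : {set {set 'I_n}}) :
  simple_graph n G ->
  (forall f, I2 R n G f -> IG R n G f) /\
  (prime_ideal R n G (I2 R n G) ->
   (forall f, inX R n G f -> I2 R n G f -> f = 0) ->
   (forall f, inS R n G f -> (I2 R n G f <-> KGs R n G f)) ->
   forall f, I2 R n G f <-> IG R n G f).
Proof.
move=> hG.
have P1 : forall f, I2 R n G f -> I0 R n G (@A R n G * f).
  move=> f; apply: (ig_ind (P := fun g => I0 R n G (@A R n G * g))).
  - by rewrite mulr0; apply: ig0.
  - by move=> a b Ha Hb; rewrite mulrDr; apply: igD.
  move=> r g Hg; rewrite mulrCA; apply: igM; case: Hg => [H1|[T [C [_ [_ E]]]]].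
    move: H1; apply: (ig_ind (P := fun g => I0 R n G (@A R n G * g))).
    + by rewrite mulr0; apply: ig0.
    + by move=> a b Ha Hb; rewrite mulrDr; apply: igD.
    move=> r' g' Hg'; rewrite mulrCA; apply: igM; case: Hg' => [H0|[k [_ ->]]].
      by apply: igM; apply: H0.
    by apply: (coreL hG (c := fun i => xv R n G i ^+ k.+1)); apply: thetaE.
  exact: (coreL hG E).
have Part1 : forall f, I2 R n G f -> IG R n G f.
  move=> f Hf; exists (@A R n G), 1; split.
  - exact: inX_A.
  - exact: A_neq0.
  - exact: inS1.
  - exact: notKGs1.
  - by rewrite mulr1; apply: P1.
split => // [[_ Hpr]] HX HS f; split; first exact: Part1.
case=> a [b [Ha Ha0 Hb Hb' H0]].
have I02 : forall g, I0 R n G g -> I2 R n G g.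
  by move=> g Hg; apply: igG; left; apply: igG; left.
case: (Hpr _ _ (I02 _ H0)) => [/Hpr [Ia|Ib]|] //.
  by move: Ha0; rewrite (HX _ Ha Ia) eqxx.
by case: Hb'; apply/(HS _ Hb).
Qed.
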